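(* Let $(X,\mathcal L,d)$ be a reduced Birkhoff--Beatley system whose vertical extension is drop complete, let $D\subseteq X$ be a nonempty convex set, and let $f,g\colon D\to\mathbb R$. Suppose that for all $n\in\mathbb N$ ($n\ge1$), all $x_0,x_1,\dots,x_n\in D$, all $x\in\operatorname{conv}\{x_1,\dots,x_n\}$ and all $t\in[0,1]$, $$f(c(t))\le(1-t)g(x_0)+t f(x),$$ where $c\colon[0,1]\to D$ is the standard parametrization of the segment $[x_0,x]$ (so $c(0)=x_0$, $c(1)=x$). Then there exists a segment convex function $\phi\colon D\to\mathbb R$ with $f\le\phi\le g$ on $D$.
   Context: A reduced Birkhoff--Beatley system is a triple $(X,\mathcal L,d)$ where $X$ is a set with at least two elements, $\mathcal L$ is a family of subsets of $X$ (lines), and $d\colon X^2\to\mathbb R$ is a function, such that: (i) any two distinct points lie in a unique line of $\mathcal L$; (ii) for each $\ell\in\mathcal L$ there is a bijection $c\colon\mathbb R\to\ell$ (a ruler) with $d(c(t),c(s))=|t-s|$. For $a,b,t\in X$, write $(atb)$ if $a,t,b$ are three distinct collinear points with $d(a,b)=d(a,t)+d(t,b)$. The segment $[a,b]$ is $\{a\}$ if $a=b$, and $\{t\mid (atb)\}\cup\{a,b\}$ otherwise. If $a\ne b$, $\ell$ is the line through them and $c$ a ruler for $\ell$ with $c(\alpha)=a$, $c(\beta)=b$, the standard parametrization of $[a,b]$ is $\tilde c\colon[0,1]\to[a,b]$, $\tilde c(t)=c((\beta-\alpha)t+\alpha)$; if $a=b$ it is the constant map $a$. A set $K$ is convex if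 $[a,b]\subseteq K$ for all $a,b\in K$; $\operatorname{conv}(H)$ is the intersection of all convex sets containing $H$. For a nonempty convex $D$, a function $\phi\colon D\to\mathbb R$ is segment convex if $\phi(c(t))\le(1-t)\phi(x_0)+t\phi(x_1)$ for all $x_0,x_1\in D$, $t\in[0,1]$, where $c$ is the standard parametrization of $[x_0,x_1]$. The system is drop complete if for every convex $K\subseteq X$ and every $x_0\in X$, $\operatorname{conv}(\{x_0\}\cup K)=\bigcup\{[x_0,x]\mid x\in K\}$. The vertical extension is $(X^*,\mathcal L^*,d^* )$ with $X^*=X\times\mathbb R$, $d^*((x_0,y_0),(x_1,y_1))=\sqrt{d(x_0,x_1)^2+(y_0-y_1)^2}$, and lines: for $(x_0,y_0)\ne(x_1,y_1)$ with $x_0\ne x_1$, taking a ruler $c$ of the line through $x_0,x_1$ with $c(s_0)=x_0,c(s_1)=x_1$ and $a=((s_0-s_1)^2+(y_0-y_1)^2)^{-1/2}$, the line $\{(c(at(s_1-s_0)+s_0),\,at(y_1-y_0)+y_0)\mid t\in\mathbb R\}$; for $x_0=x_1$, the line $\{x_0\}\times\mathbb R$. (It is itself a reduced Birkhoff--Beatley system, so segments, convexity and drop completeness make sense in it.) *)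

(* Defs.v *)
From Stdlib Require Import Reals.
Open Scope R_scope.

Section BB.
Context {X : Type} (L : (X -> Prop) -> Prop) (d : X -> X -> R).

Definition ruler (l : X -> Prop) (c : R -> X) : Prop :=
  (forall t, l (c t)) /\
  (forall x, l x -> exists t, c t = x) /\
  (forall t s, c t = c s -> t = s) /\
  (forall t s, d (c t) (c s) = Rabs (t - s)).

Definition BB_system : Prop :=
  (exists a b : X, a <> b) /\
  (forall a b : X, a <> b ->
     exists l, L l /\ l a /\ l b /\
       (forall l', L l' -> l' a -> l' b -> forall x, l' x <-> l x)) /\
  (forall l, L l -> exists c, ruler l c).

Definition collinear (a t b : X) : Prop :=
  exists l, L l /\ l a /\ l t /\ l b.

Definition between (a t b : X) : Prop :=
  a <> t /\ t <> b /\ a <> b /\ collinear a t b /\ d a b = d a t + d t b.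

Definition segment (a b : X) : X -> Prop :=
  fun t => t = a \/ t = b \/ between a t b.

Definition std_param (a b : X) (p : R -> X) : Prop :=
  (a = b /\ forall t, 0 <= t <= 1 -> p t = a) \/
  (a <> b /\ exists l c alpha beta,
      L l /\ l a /\ l b /\ ruler l c /\ c alpha = a /\ c beta = b /\
      forall t, 0 <= t <= 1 -> p t = c ((beta - alpha) * t + alpha)).

Definition convex (K : X -> Prop) : Prop :=
  forall a b, K a -> K b -> forall t, segment a b t -> K t.

Definition conv (H : X -> Prop) : X -> Prop :=
  fun x => forall K, convex K -> (forall y, H y -> K y) -> K x.

Definition segment_convex (D : X -> Prop) (phi : X -> R) : Prop :=
  forall x0 x1, D x0 -> D x1 -> forall p, std_param x0 x1 p ->
    forall t, 0 <= t <= 1 -> phi (p t) <= (1 - t) * phi x0 + t * phi x1.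

Definition drop_complete : Prop :=
  forall K, convex K -> (exists y, K y) -> forall x0 x,
    conv (fun y => y = x0 \/ K y) x <-> exists y, K y /\ segment x0 y x.

End BB.

Definition vert_dist {X : Type} (d : X -> X -> R) (p q : X * R) : R :=
  sqrt (d (fst p) (fst q) ^ 2 + (snd p - snd q) ^ 2).

Definition vert_lines {X : Type} (L : (X -> Prop) -> Prop) (d : X -> X -> R)
    (l : X * R -> Prop) : Prop :=
  exists x0 y0 x1 y1,
    (x0, y0) <> (x1, y1) /\
    ((x0 <> x1 /\
      exists ln c s0 s1, L ln /\ ln x0 /\ ln x1 /\ ruler d ln c /\
        c s0 = x0 /\ c s1 = x1 /\
        let a := / sqrt ((s0 - s1) ^ 2 + (y0 - y1) ^ 2) in
        forall p, l p <-> exists t,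
          p = (c (a * t * (s1 - s0) + s0), a * t * (y1 - y0) + y0))
     \/
     (x0 = x1 /\ forall p, l p <-> fst p = x0)).

(* Main.v *)
Require Import Defs.
From Stdlib Require Import Reals Lra List Classical ClassicalEpsilon.
Open Scope R_scope.

Lemma sqrt_scale (k A B : R) :
  sqrt ((k*A)^2 + (k*B)^2) = Rabs k * sqrt (A^2+B^2).
Proof.
  replace ((k*A)^2 + (k*B)^2) with ((k*k)*(A^2+B^2)) by ring.
  rewrite sqrt_mult_alt by nra.
  change (k*k) with (Rsqr k). rewrite sqrt_Rsqr_abs. reflexivity.
Qed.

Lemma between_abs (a b c : R) : a <> b ->
  Rabs (a - b) = Rabs (a - c) + Rabs (c - b) ->
  exists l, 0 <= l <= 1 /\ c = (1-l)*a + l*b.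
Proof.
  intros Hab Habs.
  exists ((c - a)/(b - a)).
  assert (Hba : b - a <> 0) by lra.
  assert (E : (b-a) * ((c-a)/(b-a)) = c - a) by (field; auto).
  set (l := (c-a)/(b-a)) in *.
  unfold Rabs in Habs; repeat destruct Rcase_abs in Habs;
  (split; [split; nra | nra]).
Qed.

Lemma ruler_dist {X} (d : X -> X -> R) l c s s' :
  ruler d l c -> d (c s) (c s') = Rabs (s - s').
Proof. intros [_ [_ [_ H]]]. apply H. Qed.

Lemma ruler_inj {X} (d : X -> X -> R) l c s s' :
  ruler d l c -> c s = c s' -> s = s'.
Proof. intros [_ [_ [H _]]]. apply H. Qed.

Lemma ruler_in {X} (d : X -> X -> R) l c s :
  ruler d l c -> l (c s).
Proof. intros [H _]. apply H. Qed.

Lemma d_self {X} (L : (X -> Prop) -> Prop) d : BB_system L d -> forall x, d x x = 0.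
Proof.
  intros [[a [b Hab]] [Hl Hr]] x.
  assert (exists y, x <> y) as [y Hxy].
  { destruct (classic (x = a)) as [->|]; [exists b|exists a]; auto. }
  destruct (Hl x y Hxy) as [l [HL [Hlx _]]].
  destruct (Hr l HL) as [c Hc].
  destruct Hc as [H1 [H2 [H3 H4]]].
  destruct (H2 x Hlx) as [s <-].
  rewrite H4. replace (s - s) with 0 by ring. apply Rabs_R0.
Qed.

Lemma std_param_exists {X} (L : (X -> Prop) -> Prop) d : BB_system L d ->
  forall x0 x1, exists p, std_param L d x0 x1 p.
Proof.
  intros HBB x0 x1. destruct (classic (x0 = x1)) as [E|N].
  - exists (fun _ => x0). left. split; auto.
  - destruct HBB as [_ [Hl Hr]].
    destruct (Hl x0 x1 N) as [l [HL [H0 [H1 _]]]].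
    destruct (Hr l HL) as [c Hc].
    pose proof Hc as [_ [Hs _]].
    destruct (Hs x0 H0) as [al Ha]. destruct (Hs x1 H1) as [be Hb].
    exists (fun t => c ((be - al) * t + al)). right. split; auto.
    exists l, c, al, be. do 6 (split; [auto|]). intros; reflexivity.
Qed.

Lemma std_param_ends {X} (L : (X -> Prop) -> Prop) d x0 x1 p :
  std_param L d x0 x1 p -> p 0 = x0 /\ p 1 = x1.
Proof.
  intros [[E Hp]|[N [l [c [al [be [_ [_ [_ [_ [Ha [Hb Hp]]]]]]]]]]]].
  - rewrite !Hp by lra. subst; auto.
  - rewrite !Hp by lra. split.
    + replace ((be - al) * 0 + al) with al by ring. auto.
    + replace ((be - al) * 1 + al) with be by ring. auto.
Qed.

Lemma param_in_seg {X} (L : (X -> Prop) -> Prop) d x0 x1 p t :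
  std_param L d x0 x1 p -> 0 <= t <= 1 -> segment L d x0 x1 (p t).
Proof.
  intros Hp Ht. pose proof (std_param_ends _ _ _ _ _ Hp) as [P0 P1].
  destruct (Req_dec t 0) as [->|T0]; [left; auto|].
  destruct (Req_dec t 1) as [->|T1]; [right; left; auto|].
  destruct Hp as [[E Hp]|[N [l [c [al [be [HL [Hl0 [Hl1 [Hc [Ha [Hb Hp]]]]]]]]]]]].
  - left. apply Hp; auto.
  - right; right. rewrite Hp by auto.
    assert (Nab : al <> be) by (intro; subst; auto).
    repeat split.
    + intro E. rewrite <- Ha in E. apply ruler_inj with (d:=d) (l:=l) in E; auto. nra.
    + intro E. rewrite <- Hb in E. apply ruler_inj with (d:=d) (l:=l) in E; auto. nra.
    + auto.
    + exists l. repeat split; auto. eapply ruler_in; eauto.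
    + rewrite <- Ha, <- Hb at 1. rewrite <- Ha at 1. rewrite <- Hb.
      rewrite !(ruler_dist d l c) by auto.
      replace (al - ((be - al) * t + al)) with ((be - al) * (-t)) by ring.
      replace ((be - al) * t + al - be) with ((be - al) * (t-1)) by ring.
      replace (al - be) with ((be - al) * (-1)) by ring.
      rewrite !Rabs_mult. rewrite (Rabs_left (-1)) by lra.
      rewrite (Rabs_left1 (-t)) by lra. rewrite (Rabs_left1 (t-1)) by lra. ring.
Qed.

Lemma vdist_vert {X} (L : (X -> Prop) -> Prop) d : BB_system L d ->
  forall x a b, vert_dist d (x,a) (x,b) = Rabs (a - b).
Proof.
  intros HBB x a b. unfold vert_dist; cbn [fst snd]. rewrite (d_self L d HBB).
  replace (0^2 + (a-b)^2) with (Rsqr (a-b)) by (unfold Rsqr; ring).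
  apply sqrt_Rsqr_abs.
Qed.

Lemma seg_of_param {X} (L : (X -> Prop) -> Prop) d : BB_system L d ->
  forall x0 x1 y0 y1 p t, std_param L d x0 x1 p -> 0 <= t <= 1 ->
  segment (vert_lines L d) (vert_dist d) (x0,y0) (x1,y1) (p t, (1-t)*y0 + t*y1).
Proof.
  intros HBB x0 x1 y0 y1 p t Hp Ht.
  pose proof (std_param_ends _ _ _ _ _ Hp) as [P0 P1].
  destruct (Req_dec t 0) as [->|T0].
  { left. rewrite P0. f_equal. ring. }
  destruct (Req_dec t 1) as [->|T1].
  { right; left. rewrite P1. f_equal. ring. }
  destruct Hp as [[E Hp]|[N [l [c [al [be [HL [Hl0 [Hl1 [Hc [Ha [Hb Hp]]]]]]]]]]]].
  - subst x1. rewrite Hp by auto.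
    destruct (Req_dec y0 y1) as [<-|Ny].
    { left. f_equal. ring. }
    right; right. repeat split.
    + intro E; injection E; intro E'.
      assert (Z : t*(y1-y0) = 0) by lra. apply Rmult_integral in Z; lra.
    + intro E; injection E; intro E'.
      assert (Z : (1-t)*(y1-y0) = 0) by lra. apply Rmult_integral in Z; lra.
    + intro E; injection E; intro; lra.
    + exists (fun q => fst q = x0). repeat split; auto.
      exists x0, y0, x0, y1. split.
      * intro E; injection E; intro; lra.
      * right. split; auto. intros; tauto.
    + rewrite !(vdist_vert L d HBB).
      replace (y0 - ((1-t)*y0 + t*y1)) with (t*(y0-y1)) by ring.
      replace ((1-t)*y0 + t*y1 - y1) with ((1-t)*(y0-y1)) by ring.
      rewrite !Rabs_mult. rewrite (Rabs_pos_eq t) by lra.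
      rewrite (Rabs_pos_eq (1-t)) by lra. ring.
  - rewrite Hp by auto.
    assert (Nab : al <> be) by (intro; subst; auto).
    set (S := (be - al)^2 + (y1 - y0)^2).
    assert (HS : 0 < S) by (unfold S; assert (Q : 0 < Rsqr (be - al)) by (apply Rsqr_pos_lt; intro; apply Nab; lra); rewrite Rsqr_pow2 in Q; pose proof (pow2_ge_0 (y1-y0)); lra).
    assert (HsS : 0 < sqrt S) by (apply sqrt_lt_R0; auto).
    assert (DD : forall u v, vert_dist d (c ((be-al)*u+al), (1-u)*y0+u*y1)
                                        (c ((be-al)*v+al), (1-v)*y0+v*y1)
                             = Rabs (u - v) * sqrt S).
    { intros u v. unfold vert_dist; cbn [fst snd]. rewrite (ruler_dist d l c) by auto.
      rewrite pow2_abs.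
      replace ((be - al) * u + al - ((be - al) * v + al)) with ((u-v)*(be-al)) by ring.
      replace ((1 - u) * y0 + u * y1 - ((1 - v) * y0 + v * y1)) with ((u-v)*(y1-y0)) by ring.
      apply sqrt_scale. }
    assert (E0 : (x0, y0) = (c ((be-al)*0+al), (1-0)*y0+0*y1)).
    { f_equal; [rewrite <- Ha; f_equal|]; ring. }
    assert (E1 : (x1, y1) = (c ((be-al)*1+al), (1-1)*y0+1*y1)).
    { f_equal; [rewrite <- Hb; f_equal|]; ring. }
    right; right. repeat split.
    + intro E. injection E; intros _ E'. rewrite <- Ha in E'.
      apply (ruler_inj d l c) in E'; auto. nra.
    + intro E. injection E; intros _ E'. rewrite <- Hb in E'.
      apply (ruler_inj d l c) in E'; auto. nra.
    + intro E. injection E; intros _ E'. auto.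
    + set (a := / sqrt ((al - be) ^ 2 + (y0 - y1) ^ 2)).
      assert (Ea : a * sqrt S = 1).
      { unfold a. replace ((al - be) ^ 2 + (y0 - y1) ^ 2) with S by (unfold S; ring).
        field. lra. }
      exists (fun q => exists u, q = (c (a * u * (be - al) + al), a * u * (y1 - y0) + y0)).
      split; [|split; [|split]].
      * exists x0, y0, x1, y1. split.
        { intro E. injection E; intros; auto. }
        left. split; auto. exists l, c, al, be.
        do 6 (split; [auto|]). intro q. tauto.
      * exists 0. f_equal; [rewrite <- Ha; f_equal|]; ring.
      * exists (t * sqrt S). f_equal; [f_equal|]; 
          replace (a * (t * sqrt S)) with (t * (a * sqrt S)) by ring; rewrite Ea; ring.
      * exists (sqrt S). f_equal; [rewrite <- Hb; f_equal|];
          rewrite Ea; ring.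
    + rewrite E0 at 1 2. rewrite E1 at 1 2. rewrite !DD.
      rewrite (Rabs_left1 (0 - 1)) by lra. rewrite (Rabs_left1 (0 - t)) by lra.
      rewrite (Rabs_left1 (t - 1)) by lra. ring.
Qed.

Lemma param_of_seg {X} (L : (X -> Prop) -> Prop) d : BB_system L d ->
  forall x0 x1 y0 y1 z y,
  segment (vert_lines L d) (vert_dist d) (x0,y0) (x1,y1) (z,y) ->
  exists p lam, std_param L d x0 x1 p /\ 0 <= lam <= 1 /\ z = p lam /\
     y = (1-lam)*y0 + lam*y1.
Proof.
  intros HBB x0 x1 y0 y1 z y Hs.
  destruct Hs as [E|[E|Hb]].
  { destruct (std_param_exists L d HBB x0 x1) as [p Hp].
    exists p, 0. injection E; intros -> ->.
    split; [auto|split;[lra|split]].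
    - symmetry; apply (std_param_ends _ _ _ _ _ Hp).
    - ring. }
  { destruct (std_param_exists L d HBB x0 x1) as [p Hp].
    exists p, 1. injection E; intros -> ->.
    split; [auto|split;[lra|split]].
    - symmetry; apply (std_param_ends _ _ _ _ _ Hp).
    - ring. }
  destruct Hb as [NPZ [NZQ [NPQ [[ls [Hls [HlP [HlZ HlQ]]]] Hd]]]].
  destruct Hls as [a0 [b0 [a1 [b1 [Nab Hbr]]]]].
  destruct Hbr as [[Na [ln [c [s0 [s1 [HL [H0 [H1 [Hc [Hc0 [Hc1 Hl]]]]]]]]]]]|[Ea Hl]].
  - set (A := / sqrt ((s0 - s1) ^ 2 + (b0 - b1) ^ 2)) in Hl.
    set (sg := fun u => A * u * (s1 - s0) + s0).
    set (hg := fun u => A * u * (b1 - b0) + b0).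
    assert (Ns : s0 <> s1) by (intro; subst; auto).
    set (S := (s1 - s0)^2 + (b1 - b0)^2).
    assert (HS : 0 < S) by (unfold S; assert (Q : 0 < Rsqr (s1 - s0)) by (apply Rsqr_pos_lt; intro; apply Ns; lra); rewrite Rsqr_pow2 in Q; pose proof (pow2_ge_0 (b1-b0)); lra).
    assert (HA : 0 < A).
    { unfold A. apply Rinv_0_lt_compat, sqrt_lt_R0.
      replace ((s0 - s1) ^ 2 + (b0 - b1) ^ 2) with S by (unfold S; ring). auto. }
    assert (HsS : 0 < sqrt S) by (apply sqrt_lt_R0; auto).
    assert (DD : forall u v, vert_dist d (c (sg u), hg u) (c (sg v), hg v)
                             = Rabs (u - v) * (A * sqrt S)).
    { intros u v. unfold vert_dist; cbn [fst snd]. rewrite (ruler_dist d ln c) by auto.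
      rewrite pow2_abs. unfold sg, hg.
      replace (A * u * (s1 - s0) + s0 - (A * v * (s1 - s0) + s0)) with (((u-v)*A)*(s1-s0)) by ring.
      replace (A * u * (b1 - b0) + b0 - (A * v * (b1 - b0) + b0)) with (((u-v)*A)*(b1-b0)) by ring.
      rewrite sqrt_scale. rewrite Rabs_mult, (Rabs_pos_eq A) by lra. fold S. ring. }
    apply Hl in HlP as [uP EP]. apply Hl in HlZ as [uZ EZ]. apply Hl in HlQ as [uQ EQ].
    fold (sg uP) (hg uP) in EP. fold (sg uZ) (hg uZ) in EZ. fold (sg uQ) (hg uQ) in EQ.
    rewrite EP, EZ, EQ, !DD in Hd.
    assert (NuPQ : uP <> uQ) by (intro; subst; rewrite EP, EQ in NPQ; auto).
    assert (Hd' : Rabs (uP - uQ) = Rabs (uP - uZ) + Rabs (uZ - uQ)).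
    { assert (K : 0 < A * sqrt S) by nra.
      apply (Rmult_eq_reg_r (A * sqrt S)); [|lra]. rewrite Rmult_plus_distr_r. auto. }
    destruct (between_abs uP uQ uZ NuPQ Hd') as [lam [Hlam EuZ]].
    injection EP; intros Ey0 Ex0. injection EZ; intros Ey Ez. injection EQ; intros Ey1 Ex1.
    assert (Esg : sg uZ = (sg uQ - sg uP) * lam + sg uP) by (unfold sg; rewrite EuZ; ring).
    assert (Ehg : y = (1-lam)*y0 + lam*y1) by (rewrite Ey, Ey0, Ey1; unfold hg; rewrite EuZ; ring).
    destruct (classic (x0 = x1)) as [Ex|Nx].
    + exists (fun _ => x0), lam. split; [left; split; auto|]. split; auto. split; auto.
      rewrite Ez, Ex0. rewrite Ex1, Ex0 in Ex. apply (ruler_inj d ln c) in Ex; auto.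
      rewrite Esg, Ex. f_equal. ring.
    + exists (fun t => c ((sg uQ - sg uP) * t + sg uP)), lam.
      split; [|split; [auto|split; [rewrite Ez, Esg; auto|auto]]].
      right. split; auto. exists ln, c, (sg uP), (sg uQ).
      split; [auto|]. split; [rewrite Ex0; eapply ruler_in; eauto|].
      split; [rewrite Ex1; eapply ruler_in; eauto|].
      split; [auto|]. split; [auto|]. split; [auto|]. intros; reflexivity.
  - pose proof (HlP) as HP. pose proof HlZ as HZ. pose proof HlQ as HQ.
    apply Hl in HP, HZ, HQ. cbn [fst] in HP, HZ, HQ. subst.
    rewrite !(vdist_vert L d HBB) in Hd.
    assert (Ny : y0 <> y1) by (intro; subst; auto).
    destruct (between_abs y0 y1 y Ny Hd) as [lam [Hlam Ey]].
    exists (fun _ => a1), lam. split; [left; split; auto|]. auto.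
Qed.

Lemma conv_incl {Y} (L : (Y -> Prop) -> Prop) d (A B : Y -> Prop) :
  (forall y, A y -> B y) -> forall x, conv L d A x -> conv L d B x.
Proof. intros HAB x Hx K HK HB. apply Hx; auto. Qed.

Lemma conv_sub {Y} (L : (Y -> Prop) -> Prop) d (A : Y -> Prop) :
  forall x, A x -> conv L d A x.
Proof. intros x Hx K HK HA. auto. Qed.

Lemma conv_convex {Y} (L : (Y -> Prop) -> Prop) d (A : Y -> Prop) :
  convex L d (conv L d A).
Proof. intros a b Ha Hb t Ht K HK HA. apply (HK a b); [apply Ha|apply Hb|]; auto. Qed.

Lemma conv_min {Y} (L : (Y -> Prop) -> Prop) d (A K : Y -> Prop) :
  convex L d K -> (forall y, A y -> K y) -> forall x, conv L d A x -> K x.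
Proof. intros HK HA x Hx. apply Hx; auto. Qed.

Lemma single_convex {Y} (L : (Y -> Prop) -> Prop) d (a : Y) :
  convex L d (fun y => y = a).
Proof.
  intros u v -> -> t [E|[E|[_ [_ [N _]]]]]; auto. contradiction.
Qed.

Theorem theorem1 (X : Type) (L : (X -> Prop) -> Prop) (d : X -> X -> R)
  (HBB : BB_system L d)
  (Hdc : drop_complete (vert_lines L d) (vert_dist d))
  (D : X -> Prop) (HDne : exists x, D x) (HDc : convex L d D)
  (f g : X -> R)
  (H : forall (n : nat), (1 <= n)%nat -> forall xs : nat -> X,
        (forall i, (i <= n)%nat -> D (xs i)) ->
        forall x, conv L d (fun y => exists i, (1 <= i <= n)%nat /\ y = xs i) x ->
        forall p, std_param L d (xs O) x p ->
        forall t, 0 <= t <= 1 ->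
          f (p t) <= (1 - t) * g (xs O) + t * f x) :
  exists phi : X -> R, segment_convex L d D phi /\
    (forall x, D x -> f x <= phi x /\ phi x <= g x).
Proof.
  set (LS := vert_lines L d). set (dS := vert_dist d).
  assert (H2 : forall x0 x p t, D x0 -> D x -> std_param L d x0 x p -> 0 <= t <= 1 ->
            f (p t) <= (1 - t) * g x0 + t * f x).
  { intros x0 x p t D0 Dx Hp Ht.
    apply (H 1%nat (le_n _) (fun i => match i with O => x0 | _ => x end)); auto.
    - intros [|i] _; auto.
    - apply conv_sub. exists 1%nat. split; auto. }
  assert (Hfg : forall x, D x -> f x <= g x).
  { intros x Dx.
    assert (Hp : std_param L d x x (fun _ => x)) by (left; split; auto).
    pose proof (H2 x x _ 0 Dx Dx Hp) as Q. lra. }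
  set (E := fun Z : X * R => D (fst Z) /\ g (fst Z) <= snd Z).
  set (Good := fun Z : X * R => D (fst Z) /\ f (fst Z) <= snd Z).
  set (C := conv LS dS E).
  assert (Hfin : forall ps, (forall Y, In Y ps -> E Y) ->
            forall Z, conv LS dS (fun Y => In Y ps) Z -> Good Z).
  { induction ps as [|P0 ps IH]; intros HE Z HZ.
    - exfalso. apply (HZ (fun _ => False)); [|intros y []].
      intros a b []. 
    - destruct ps as [|P1 ps'].
      + assert (Z = P0).
        { apply (HZ (fun y => y = P0)); [apply single_convex|].
          intros y [->|[]]; auto. }
        subst. destruct (HE P0 (or_introl eq_refl)) as [HD Hg].
        split; auto. specialize (Hfg _ HD). lra.
      + set (K := conv LS dS (fun Y => In Y (P1 :: ps'))).
        assert (HK : convex LS dS K) by apply conv_convex.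
        assert (HKne : exists y, K y) by (exists P1; apply conv_sub; left; auto).
        assert (HZ' : conv LS dS (fun y => y = P0 \/ K y) Z).
        { apply (conv_incl LS dS (fun Y => In Y (P0 :: P1 :: ps'))); auto.
          intros y [<-|Hy]; [left; auto|right; apply conv_sub; auto]. }
        apply (Hdc K HK HKne P0 Z) in HZ' as [Y [HKY HsY]].
        assert (GY : Good Y).
        { apply IH; auto. intros; apply HE; right; auto. }
        destruct P0 as [x0 y0], Y as [x w], Z as [z y].
        destruct (HE (x0,y0) (or_introl eq_refl)) as [D0 G0]. cbn [fst snd] in D0, G0.
        destruct GY as [Dx Fx]. cbn [fst snd] in Dx, Fx.
        destruct (param_of_seg L d HBB x0 x y0 w z y HsY) as [p [lam [Hp [Hl [-> ->]]]]].
        split; cbn [fst snd].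
        * apply (HDc x0 x D0 Dx). apply param_in_seg; auto.
        * pose proof (H2 x0 x p lam D0 Dx Hp Hl).
          assert (0 <= (1-lam)*(y0 - g x0)) by (apply Rmult_le_pos; lra).
          assert (0 <= lam*(w - f x)) by (apply Rmult_le_pos; lra).
          lra. }
  assert (HCgood : forall Z, C Z -> Good Z).
  { intros Z HZ.
    set (U := fun Z => exists ps, (forall Y, In Y ps -> E Y) /\ conv LS dS (fun Y => In Y ps) Z).
    assert (HU : U Z).
    { apply (conv_min LS dS E U); auto.
      - intros a b [ps1 [E1 H1]] [ps2 [E2 H2']] t Ht.
        exists (ps1 ++ ps2). split.
        + intros Y HY. apply in_app_or in HY as [|]; auto.
        + apply (conv_convex LS dS _ a b); auto.
          * apply (conv_incl LS dS (fun Y => In Y ps1)); auto. intros; apply in_or_app; auto.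
          * apply (conv_incl LS dS (fun Y => In Y ps2)); auto. intros; apply in_or_app; auto.
      - intros y Hy. exists (y :: nil). split.
        + intros Y [<-|[]]; auto.
        + apply conv_sub. left; auto. }
    destruct HU as [ps [HE HZ']]. eapply Hfin; eauto. }
  assert (Hm : forall z, {m | D z -> is_lub (fun v => C (z, - v)) m}).
  { intro z. apply constructive_indefinite_description.
    destruct (classic (D z)) as [Dz|NDz]; [|exists 0; tauto].
    assert (Hb : bound (fun v => C (z, - v))).
    { exists (- f z). intros v Hv. apply HCgood in Hv as [_ Hv]. cbn in Hv. lra. }
    assert (Hne : exists v, C (z, - v)).
    { exists (- g z). apply conv_sub. rewrite Ropp_involutive. split; cbn; auto; lra. }
    destruct (completeness _ Hb Hne) as [m Hm]. exists m; auto. }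
  set (phi := fun z => - proj1_sig (Hm z)).
  assert (Hup : forall z y, D z -> C (z,y) -> phi z <= y).
  { intros z y Dz Hzy. unfold phi. destruct (Hm z) as [m Hm']; cbn.
    destruct (Hm' Dz) as [Hu _]. assert (- y <= m); [|lra].
    apply Hu. rewrite Ropp_involutive. auto. }
  assert (Hlow : forall z, D z -> f z <= phi z).
  { intros z Dz. unfold phi. destruct (Hm z) as [m Hm']; cbn.
    destruct (Hm' Dz) as [_ Hl]. assert (m <= - f z); [|lra].
    apply Hl. intros v Hv. apply HCgood in Hv as [_ Hv]. cbn in Hv. lra. }
  assert (Happ : forall z eps, D z -> 0 < eps -> exists y, C (z,y) /\ y < phi z + eps).
  { intros z eps Dz Heps. apply NNPP. intro Hn.
    unfold phi in *. destruct (Hm z) as [m Hm']; cbn in *.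
    destruct (Hm' Dz) as [_ Hl].
    assert (m <= m - eps); [|lra].
    apply Hl. intros v Hv. destruct (Rle_dec v (m - eps)) as [|Nv]; auto.
    exfalso. apply Hn. exists (- v). split; auto. lra. }
  exists phi. split.
  - intros x0 x1 D0 D1 p Hp t Ht.
    assert (Dpt : D (p t)) by (apply (HDc x0 x1 D0 D1); apply param_in_seg; auto).
    apply Rnot_gt_le. intro Hgt.
    set (eps := phi (p t) - ((1 - t) * phi x0 + t * phi x1)).
    assert (Heps : 0 < eps / 2) by (unfold eps; lra).
    destruct (Happ x0 _ D0 Heps) as [y0 [C0 L0]].
    destruct (Happ x1 _ D1 Heps) as [y1 [C1 L1]].
    assert (Cp : C (p t, (1-t)*y0 + t*y1)).
    { apply (conv_convex LS dS E (x0,y0) (x1,y1)); auto.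
      apply seg_of_param; auto. }
    pose proof (Hup _ _ Dpt Cp).
    assert ((1-t)*y0 <= (1-t)*(phi x0 + eps/2)) by (apply Rmult_le_compat_l; lra).
    assert (t*y1 <= t*(phi x1 + eps/2)) by (apply Rmult_le_compat_l; lra).
    unfold eps in *. lra.
  - intros x Dx. split; auto.
    apply Hup; auto. apply conv_sub. split; cbn; auto. lra.
Qed.
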